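(* Let $X$ be a connected, locally path connected space. If $\{H_j: j\in J\}$ is any collection of generalized covering subgroups of $\pi_1(X,x_0)$, then $H=\bigcap_{j\in J}H_j$ is a generalized covering subgroup of $\pi_1(X,x_0)$.
   Context: A map $p:(\tilde X,\tilde x_0)\to(X,x_0)$ has the unique lifting (UL) property if for every connected, locally path connected pointed space $(Y,y_0)$ and every map $f:(Y,y_0)\to(X,x_0)$ with $f_*\pi_1(Y,y_0)\subseteq p_*\pi_1(\tilde X,\tilde x_0)$ there is a unique continuous $\tilde f:(Y,y_0)\to(\tilde X,\tilde x_0)$ with $p\circ\tilde f=f$. If $\tilde X$ is connected and locally path connected and $p$ has UL, $p$ is a generalized covering map, and $p_*\pi_1(\tilde X,\tilde x_0)$ is called a generalized covering subgroup of $\pi_1(X,x_0)$. *)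

(* Defs.v *)
From Stdlib Require Import Reals Lra.
Open Scope R_scope.

Record Top := {
  carrier :> Type;
  is_open : (carrier -> Prop) -> Prop;
  open_full : is_open (fun _ => True);
  open_inter : forall U V, is_open U -> is_open V -> is_open (fun x => U x /\ V x);
  open_union : forall F : (carrier -> Prop) -> Prop,
      (forall U, F U -> is_open U) -> is_open (fun x => exists U, F U /\ U x)
}.

Definition continuous {X Y : Top} (f : X -> Y) : Prop :=
  forall V : Y -> Prop, is_open Y V -> is_open X (fun x => V (f x)).

Definition openR (U : R -> Prop) : Prop :=
  forall x, U x -> exists e, 0 < e /\ forall y, Rabs (y - x) < e -> U y.

Definition I : Type := { t : R | 0 <= t <= 1 }.

Definition openI (V : I -> Prop) : Prop :=
  exists U, openR U /\ forall t : I, V t <-> U (proj1_sig t).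

Definition openII (W : I * I -> Prop) : Prop :=
  forall s t, W (s, t) -> exists U V, openI U /\ openI V /\ U s /\ V t /\
    forall s' t', U s' -> V t' -> W (s', t').

Lemma I0_pf : 0 <= 0 <= 1. Proof. lra. Qed.
Lemma I1_pf : 0 <= 1 <= 1. Proof. lra. Qed.
Definition I0 : I := exist _ 0 I0_pf.
Definition I1 : I := exist _ 1 I1_pf.

Definition is_path {X : Top} (g : I -> X) : Prop :=
  forall V : X -> Prop, is_open X V -> openI (fun t => V (g t)).

Definition is_loop {X : Top} (x0 : X) (g : I -> X) : Prop :=
  is_path g /\ g I0 = x0 /\ g I1 = x0.

Definition loop_homotopic {X : Top} (x0 : X) (a b : I -> X) : Prop :=
  exists H : I * I -> X,
    (forall V : X -> Prop, is_open X V -> openII (fun st => V (H st))) /\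
    (forall s, H (s, I0) = a s) /\ (forall s, H (s, I1) = b s) /\
    (forall t, H (I0, t) = x0) /\ (forall t, H (I1, t) = x0).

Definition connected (X : Top) : Prop :=
  (exists x : X, True) /\
  forall U V : X -> Prop, is_open X U -> is_open X V ->
    (forall x, U x \/ V x) -> (forall x, ~ (U x /\ V x)) ->
    ~ ((exists x, U x) /\ (exists x, V x)).

Definition locally_path_connected (X : Top) : Prop :=
  forall (x : X) (U : X -> Prop), is_open X U -> U x ->
    exists V : X -> Prop, is_open X V /\ V x /\ (forall y, V y -> U y) /\
      forall y z, V y -> V z -> exists g : I -> X,
        is_path g /\ g I0 = y /\ g I1 = z /\ forall t, V (g t).

(** Subgroups of pi_1(X,x0) are represented by their sets of representing loops
    (predicates on maps I -> X; only their values on loops at x0 matter).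
    [induced_sub p xt0 a] : the loop a at p xt0 represents a class in p_* pi_1(Xt, xt0). *)
Definition induced_sub {Xt X : Top} (p : Xt -> X) (xt0 : Xt) (a : I -> X) : Prop :=
  exists b : I -> Xt, is_loop xt0 b /\ loop_homotopic (p xt0) (fun s => p (b s)) a.

Definition unique_lifting {Xt X : Top} (p : Xt -> X) (xt0 : Xt) : Prop :=
  forall (Y : Top) (y0 : Y) (f : Y -> X),
    connected Y -> locally_path_connected Y -> continuous f -> f y0 = p xt0 ->
    (forall g : I -> Y, is_loop y0 g -> induced_sub p xt0 (fun s => f (g s))) ->
    exists ft : Y -> Xt,
      (continuous ft /\ ft y0 = xt0 /\ forall y, p (ft y) = f y) /\
      forall gt : Y -> Xt,
        (continuous gt /\ gt y0 = xt0 /\ forall y, p (gt y) = f y) -> gt = ft.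

Definition generalized_covering_subgroup (X : Top) (x0 : X) (H : (I -> X) -> Prop) : Prop :=
  exists (Xt : Top) (xt0 : Xt) (p : Xt -> X),
    connected Xt /\ locally_path_connected Xt /\ continuous p /\ p xt0 = x0 /\
    unique_lifting p xt0 /\
    forall a : I -> X, is_loop x0 a -> (H a <-> induced_sub p xt0 a).

(* Main.v *)
Require Import Defs.
From Stdlib Require Import Reals Lra ProofIrrelevance FunctionalExtensionality ClassicalEpsilon Classical PropExtensionality.
Open Scope R_scope.

Definition vI (t : I) : R := proj1_sig t.
Lemma vI_bnd (t : I) : 0 <= vI t <= 1. Proof. exact (proj2_sig t). Qed.
Lemma I_eq (a b : I) : vI a = vI b -> a = b.
Proof. destruct a as [a ha], b as [b hb]; unfold vI; simpl; intros ->. f_equal; apply proof_irrelevance. Qed.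

Definition clampR (x : R) : R := Rmax 0 (Rmin 1 x).
Lemma clamp_pf (x : R) : 0 <= clampR x <= 1.
Proof. unfold clampR, Rmax, Rmin; repeat destruct Rle_dec; lra. Qed.
Definition cl (x : R) : I := exist _ (clampR x) (clamp_pf x).
Lemma cl_v (x : R) : 0 <= x <= 1 -> vI (cl x) = x.
Proof. intros; unfold vI, cl, clampR, Rmax, Rmin; simpl; repeat destruct Rle_dec; lra. Qed.
Lemma cl_lip (x y : R) : Rabs (vI (cl x) - vI (cl y)) <= Rabs (x - y).
Proof. unfold vI, cl, clampR, Rmax, Rmin; simpl; repeat destruct Rle_dec;
  repeat (unfold Rabs; destruct Rcase_abs); lra. Qed.
Lemma cl_vI (t : I) : cl (vI t) = t.
Proof. apply I_eq; apply cl_v, vI_bnd. Qed.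
Lemma cl0 : cl 0 = I0. Proof. apply I_eq; rewrite cl_v; unfold vI, I0; simpl; lra. Qed.
Lemma cl1 : cl 1 = I1. Proof. apply I_eq; rewrite cl_v; unfold vI, I1; simpl; lra. Qed.

Definition relopen (V : I -> Prop) : Prop :=
  forall t, V t -> exists e, 0 < e /\ forall t', Rabs (vI t' - vI t) < e -> V t'.

Lemma openI_relopen V : openI V <-> relopen V.
Proof.
  split.
  - intros [U [HU HV]] t Vt. apply HV in Vt. destruct (HU _ Vt) as [e [He H]].
    exists e; split; auto. intros t' Ht'. apply HV, H, Ht'.
  - intros H. exists (fun x => exists t, V t /\ exists e, 0 < e /\
       (forall t', Rabs (vI t' - vI t) < e -> V t') /\ Rabs (x - vI t) < e).
    split.
    + intros x [t [Vt [e [He [Ht Hx]]]]]. exists (e - Rabs (x - vI t)). split. lra.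
      intros y Hy. exists t; split; auto. exists e; repeat split; auto.
      pose proof (Rabs_triang (y - x) (x - vI t)). replace (y - x + (x - vI t)) with (y - vI t) in H0 by ring. lra.
    + intros t; split.
      * intros Vt. destruct (H t Vt) as [e [He Ht]]. exists t; split; auto. exists e; repeat split; auto.
        unfold Rminus; rewrite Rplus_opp_r, Rabs_R0; lra.
      * intros [t0 [Vt [e [He [Ht Hx]]]]]. apply Ht, Hx.
Qed.

Lemma relopen_full : relopen (fun _ => True).
Proof. intros t _; exists 1; split; auto; lra. Qed.

Definition TopI : Top.
Proof.
  refine {| carrier := I; is_open := openI |}.
  - apply openI_relopen, relopen_full.
  - intros U V HU HV. apply openI_relopen. apply openI_relopen in HU, HV.
    intros t [Ut Vt]. destruct (HU t Ut) as [e1 [He1 H1]], (HV t Vt) as [e2 [He2 H2]].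
    exists (Rmin e1 e2); split. apply Rmin_pos; auto.
    intros t' Ht'; split; [apply H1|apply H2]; pose proof (Rmin_l e1 e2); pose proof (Rmin_r e1 e2); lra.
  - intros F HF. apply openI_relopen. intros t [U [FU Ut]].
    pose proof (HF U FU) as HU. apply openI_relopen in HU. destruct (HU t Ut) as [e [He H]].
    exists e; split; auto. intros t' Ht'. exists U; split; auto.
Defined.

Lemma path_eps {X : Top} (g : I -> X) : is_path g <->
  forall V, is_open X V -> forall t, V (g t) -> exists e, 0 < e /\ forall t', Rabs (vI t' - vI t) < e -> V (g t').
Proof.
  split.
  - intros Hg V HV. apply (proj1 (openI_relopen _)), Hg, HV.
  - intros H V HV. apply openI_relopen. intros t. apply H; auto.
Qed.

Lemma reparam {X : Top} (g : I -> X) (phi : I -> I) (K : R) : 0 < K ->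
  (forall s s', Rabs (vI (phi s) - vI (phi s')) <= K * Rabs (vI s - vI s')) ->
  is_path g -> is_path (fun s => g (phi s)).
Proof.
  intros HK Hphi Hg. apply path_eps. intros V HV t Vt.
  destruct (proj1 (path_eps g) Hg V HV (phi t) Vt) as [e [He H]].
  exists (e / K); split. apply Rdiv_lt_0_compat; auto.
  intros t' Ht'. apply H. eapply Rle_lt_trans. apply Hphi.
  apply Rmult_lt_compat_l with (r:=K) in Ht'; auto. field_simplify in Ht'; lra.
Qed.

Lemma path_id : @is_path TopI (fun t => t).
Proof. intros V HV. exact HV. Qed.

Lemma path_const {X : Top} (x : X) : is_path (fun _ : I => x).
Proof. apply path_eps. intros V HV t Vt. exists 1; split; auto; lra. Qed.

Lemma path_comp {X Y : Top} (f : X -> Y) (g : I -> X) : continuous f -> is_path g -> is_path (fun t => f (g t)).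
Proof. intros Hf Hg V HV. apply (Hg (fun x => V (f x))), Hf, HV. Qed.

Definition concat {X : Top} (g1 g2 : I -> X) (t : I) : X :=
  if Rle_dec (vI t) (1/2) then g1 (cl (2 * vI t)) else g2 (cl (2 * vI t - 1)).

Lemma concat0 {X : Top} (g1 g2 : I -> X) : concat g1 g2 I0 = g1 I0.
Proof. unfold concat. destruct Rle_dec; unfold vI, I0 in *; simpl in *. rewrite Rmult_0_r, cl0; auto. lra. Qed.
Lemma concat1 {X : Top} (g1 g2 : I -> X) : concat g1 g2 I1 = g2 I1.
Proof. unfold concat. destruct Rle_dec; unfold vI, I1 in *; simpl in *. lra.
  replace (2*1-1) with 1 by ring. rewrite cl1; auto. Qed.
Lemma concat_val {X : Top} (g1 g2 : I -> X) t : exists s, concat g1 g2 t = g1 s \/ concat g1 g2 t = g2 s.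
Proof. unfold concat; destruct Rle_dec; eauto. Qed.

Lemma concat_path {X : Top} (g1 g2 : I -> X) : is_path g1 -> is_path g2 -> g1 I1 = g2 I0 ->
  is_path (concat g1 g2).
Proof.
  intros H1 H2 E. apply path_eps. intros V HV t Vt.
  pose proof (vI_bnd t) as Bt.
  destruct (Rtotal_order (vI t) (1/2)) as [Hlt|[Heq|Hgt]].
  - unfold concat in Vt; destruct Rle_dec; [|lra].
    destruct (proj1 (path_eps _) H1 V HV _ Vt) as [e [He H]].
    exists (Rmin (e/2) (1/2 - vI t)); split. apply Rmin_pos; lra.
    intros t' Ht'. pose proof (Rmin_l (e/2) (1/2 - vI t)); pose proof (Rmin_r (e/2) (1/2 - vI t)).
    unfold concat. destruct Rle_dec.
    + apply H. eapply Rle_lt_trans. apply cl_lip.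
      replace (2 * vI t' - 2 * vI t) with (2 * (vI t' - vI t)) by ring. rewrite Rabs_mult, Rabs_right; lra.
    + exfalso. apply Rabs_def2 in Ht'. lra.
  - assert (Vt1 : V (g1 I1)). { unfold concat in Vt; destruct Rle_dec; [|lra]. rewrite Heq in Vt.
      replace (2*(1/2)) with 1 in Vt by field. rewrite cl1 in Vt; auto. }
    assert (Vt2 : V (g2 I0)) by (rewrite <- E; auto).
    destruct (proj1 (path_eps _) H1 V HV _ Vt1) as [e1 [He1 Q1]].
    destruct (proj1 (path_eps _) H2 V HV _ Vt2) as [e2 [He2 Q2]].
    exists (Rmin e1 e2 / 2); split. pose proof (Rmin_pos _ _ He1 He2); lra.
    intros t' Ht'. pose proof (Rmin_l e1 e2); pose proof (Rmin_r e1 e2). rewrite Heq in Ht'.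
    apply Rabs_def2 in Ht'. pose proof (vI_bnd t').
    unfold concat. destruct Rle_dec.
    + apply Q1. rewrite <- cl1. eapply Rle_lt_trans. apply cl_lip.
      rewrite Rabs_left1; lra.
    + apply Q2. rewrite <- cl0. eapply Rle_lt_trans. apply cl_lip.
      rewrite Rabs_right; lra.
  - unfold concat in Vt; destruct Rle_dec; [lra|].
    destruct (proj1 (path_eps _) H2 V HV _ Vt) as [e [He H]].
    exists (Rmin (e/2) (vI t - 1/2)); split. apply Rmin_pos; lra.
    intros t' Ht'. pose proof (Rmin_l (e/2) (vI t - 1/2)); pose proof (Rmin_r (e/2) (vI t - 1/2)).
    unfold concat. destruct Rle_dec.
    + exfalso. apply Rabs_def2 in Ht'. lra.
    + apply H. eapply Rle_lt_trans. apply cl_lip.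
      replace (2 * vI t' - 1 - (2 * vI t - 1)) with (2 * (vI t' - vI t)) by ring. rewrite Rabs_mult, Rabs_right; lra.
Qed.

Definition revp {X : Top} (g : I -> X) (t : I) : X := g (cl (1 - vI t)).
Lemma revp_path {X : Top} (g : I -> X) : is_path g -> is_path (revp g).
Proof. intros Hg. apply (reparam g (fun t => cl (1 - vI t)) 1); auto; try lra.
  intros s s'. rewrite Rmult_1_l. eapply Rle_trans. apply cl_lip.
  replace (1 - vI s - (1 - vI s')) with (-(vI s - vI s')) by ring. rewrite Rabs_Ropp; lra. Qed.
Lemma revp0 {X : Top} (g : I -> X) : revp g I0 = g I1.
Proof. unfold revp, vI, I0; simpl. rewrite Rminus_0_r, cl1; auto. Qed.
Lemma revp1 {X : Top} (g : I -> X) : revp g I1 = g I0.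
Proof. unfold revp, vI, I1; simpl. rewrite Rminus_eq_0, cl0; auto. Qed.

Definition prep {X : Top} (g : I -> X) (u : I) (t : I) : X := g (cl (vI u * vI t)).
Lemma prep_path {X : Top} (g : I -> X) u : is_path g -> is_path (prep g u).
Proof. intros Hg. apply (reparam g (fun t => cl (vI u * vI t)) 1); auto; try lra.
  intros s s'. rewrite Rmult_1_l. eapply Rle_trans. apply cl_lip.
  replace (vI u * vI s - vI u * vI s') with (vI u * (vI s - vI s')) by ring. rewrite Rabs_mult.
  pose proof (vI_bnd u). rewrite (Rabs_right (vI u)) by lra.
  pose proof (Rabs_pos (vI s - vI s')). nra. Qed.
Lemma prep0 {X : Top} (g : I -> X) u : prep g u I0 = g I0.
Proof. unfold prep, vI at 2, I0; simpl. rewrite Rmult_0_r, cl0; auto. Qed.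
Lemma prep1 {X : Top} (g : I -> X) u : prep g u I1 = g u.
Proof. unfold prep, vI at 2, I1; simpl. rewrite Rmult_1_r, cl_vI; auto. Qed.

Definition linI (y z : I) (t : I) : I := cl ((1 - vI t) * vI y + vI t * vI z).
Lemma linI_v y z t : vI (linI y z t) = (1 - vI t) * vI y + vI t * vI z.
Proof. unfold linI. apply cl_v. pose proof (vI_bnd y); pose proof (vI_bnd z); pose proof (vI_bnd t); nra. Qed.
Lemma linI_lip y z s s' : Rabs (vI (linI y z s) - vI (linI y z s')) <= Rabs (vI s - vI s').
Proof. rewrite !linI_v. replace ((1 - vI s) * vI y + vI s * vI z - ((1 - vI s') * vI y + vI s' * vI z))
  with ((vI s - vI s') * (vI z - vI y)) by ring. rewrite Rabs_mult.
  pose proof (vI_bnd y); pose proof (vI_bnd z).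
  assert (Rabs (vI z - vI y) <= 1) by (apply Rabs_le; lra). pose proof (Rabs_pos (vI s - vI s')). nra. Qed.
Lemma linI_path y z : @is_path TopI (linI y z).
Proof. apply (reparam (X:=TopI) (fun t => t) (linI y z) 1); [lra| |apply path_id].
  intros; rewrite Rmult_1_l; apply linI_lip. Qed.
Lemma linI0 y z : linI y z I0 = y.
Proof. apply I_eq; rewrite linI_v; unfold vI at 1 3, I0; simpl; ring. Qed.
Lemma linI1 y z : linI y z I1 = z.
Proof. apply I_eq; rewrite linI_v; unfold vI at 1 3, I1; simpl; ring. Qed.

Lemma lpc_I : locally_path_connected TopI.
Proof.
  intros x U HU Ux. simpl in HU. apply openI_relopen in HU. destruct (HU x Ux) as [e [He H]].
  exists (fun t => Rabs (vI t - vI x) < e). split; [|split; [|split]].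
  - simpl. apply openI_relopen. intros t Ht. exists (e - Rabs (vI t - vI x)); split. lra.
    intros t' Ht'. pose proof (Rabs_triang (vI t' - vI t) (vI t - vI x)).
    replace (vI t' - vI t + (vI t - vI x)) with (vI t' - vI x) in H0 by ring. lra.
  - unfold Rminus; rewrite Rplus_opp_r, Rabs_R0; auto.
  - auto.
  - intros y z Hy Hz. exists (linI y z). split; [apply linI_path|split; [apply linI0|split; [apply linI1|]]].
    intros t. rewrite linI_v. pose proof (vI_bnd t).
    replace ((1 - vI t) * vI y + vI t * vI z - vI x) with ((1 - vI t) * (vI y - vI x) + vI t * (vI z - vI x)) by ring.
    eapply Rle_lt_trans. apply Rabs_triang. rewrite !Rabs_mult, (Rabs_right (1 - vI t)), (Rabs_right (vI t)) by lra.
    destruct (Req_dec (vI t) 0). rewrite H1. lra. nra.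
Qed.

Lemma conn_I_aux (U V : I -> Prop) : relopen U -> relopen V ->
  (forall x, U x \/ V x) -> (forall x, ~ (U x /\ V x)) -> U I0 -> forall t, U t.
Proof.
  intros HU HV Hc Hd U0.
  set (S := fun x => 0 <= x <= 1 /\ forall t, vI t <= x -> U t).
  assert (Sb : bound S). { exists 1. intros x [Hx _]. lra. }
  assert (S0 : exists x, S x). { exists 0. split. lra. intros t Ht. replace t with I0; auto.
     apply I_eq. pose proof (vI_bnd t). unfold vI at 1, I0; simpl; lra. }
  destruct (completeness S Sb S0) as [c [Hub Hlub]].
  assert (c0 : 0 <= c) by (apply Hub; split; [lra|]; intros t Ht; replace t with I0; auto;
     apply I_eq; pose proof (vI_bnd t); unfold vI at 1, I0; simpl; lra).
  assert (c1 : c <= 1) by (apply Hlub; intros x [Hx _]; lra).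
  assert (below : forall t, vI t < c -> U t).
  { intros t Ht. destruct (classic (exists x, S x /\ vI t <= x)) as [[x [[_ Sx] Hx]]|N].
    - apply Sx, Hx.
    - exfalso. assert (c <= vI t). { apply Hlub. intros x Sx. destruct (Rle_dec x (vI t)); auto.
        exfalso; apply N; exists x; split; auto; lra. } lra. }
  set (tc := cl c). assert (Etc : vI tc = c) by (apply cl_v; lra).
  destruct (Hc tc) as [Utc|Vtc].
  - destruct (HU tc Utc) as [e [He H]].
    assert (near : forall t, vI t <= c -> U t).
    { intros t Ht. destruct (Rle_lt_or_eq_dec _ _ Ht). apply below; auto. apply H. rewrite Etc, e0.
      unfold Rminus; rewrite Rplus_opp_r, Rabs_R0; auto. }
    destruct (Req_dec c 1) as [E1|N1].
    + intros t; apply near; pose proof (vI_bnd t); lra.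
    + exfalso. set (x' := Rmin 1 (c + e/2)).
      assert (S x'). { split. unfold x'; pose proof (Rmin_l 1 (c+e/2)); pose proof (Rmin_r 1 (c + e/2));
          unfold Rmin; destruct Rle_dec; lra.
        intros t Ht. destruct (Rle_dec (vI t) c). apply near; auto. apply H. rewrite Etc.
        pose proof (Rmin_r 1 (c + e/2)). fold x' in H0. rewrite Rabs_right; lra. }
      apply Hub in H0. unfold x', Rmin in H0; destruct Rle_dec; lra.
  - exfalso. destruct (HV tc Vtc) as [e [He H]].
    assert (cpos : 0 < c). { destruct (Rle_lt_or_eq_dec _ _ c0); auto. exfalso. apply (Hd I0); split; auto.
      replace I0 with tc; auto. apply I_eq. rewrite Etc. unfold vI, I0; simpl; auto. }
    set (t := cl (Rmax 0 (c - e/2))).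
    assert (Et : vI t = Rmax 0 (c - e/2)) by (apply cl_v; unfold Rmax; destruct Rle_dec; lra).
    apply (Hd t); split.
    + apply below. rewrite Et. unfold Rmax; destruct Rle_dec; lra.
    + apply H. rewrite Et, Etc. unfold Rmax; destruct Rle_dec; rewrite Rabs_left1; lra.
Qed.

Lemma connected_I : connected TopI.
Proof.
  split. exists I0; auto.
  intros U V HU HV Hc Hd [[u Uu] [v Vv]]. simpl in HU, HV.
  apply openI_relopen in HU, HV.
  destruct (Hc I0) as [U0|V0].
  - apply (Hd v); split; auto. apply (conn_I_aux U V); auto.
  - apply (Hd u); split; auto. apply (conn_I_aux V U); auto. intros x; destruct (Hc x); auto.
    intros x [a b]; apply (Hd x); auto.
Qed.

Lemma pathconn_connected (Y : Top) (y0 : Y) :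
  (forall y, exists g : I -> Y, is_path g /\ g I0 = y0 /\ g I1 = y) -> connected Y.
Proof.
  intros H. split. exists y0; auto.
  intros U V HU HV Hc Hd [[u Uu] [v Vv]].
  assert (side : forall W W' : Y -> Prop, is_open Y W -> is_open Y W' -> (forall x, ~ (W x /\ W' x)) ->
       (forall x, W x \/ W' x) -> W y0 -> forall y, W y).
  { intros W W' HW HW' Hd' Hc' W0 y. destruct (H y) as [g [Hg [g0 g1]]].
    destruct connected_I as [_ C]. destruct (Hc' y) as [Wy|W'y]; auto. exfalso.
    apply (C (fun t => W (g t)) (fun t => W' (g t))); simpl; auto.
    split; [exists I0; rewrite g0; auto | exists I1; rewrite g1; auto]. }
  destruct (Hc y0) as [U0|V0].
  - apply (Hd v); split; auto. apply (side U V); auto.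
  - apply (Hd u); split; auto. apply (side V U); auto. intros x [a b]; apply (Hd x); auto.
    intros x; destruct (Hc x); auto.
Qed.

Definition ballII (c : I * I) e (q : I * I) : Prop :=
  Rabs (vI (fst q) - vI (fst c)) < e /\ Rabs (vI (snd q) - vI (snd c)) < e.

Lemma openII_eps W : openII W <-> forall s t, W (s, t) -> exists e, 0 < e /\
   forall s' t', Rabs (vI s' - vI s) < e -> Rabs (vI t' - vI t) < e -> W (s', t').
Proof.
  split.
  - intros H s t Wst. destruct (H s t Wst) as [U [V [HU [HV [Us [Vt HW]]]]]].
    apply openI_relopen in HU, HV. destruct (HU s Us) as [e1 [He1 H1]], (HV t Vt) as [e2 [He2 H2]].
    exists (Rmin e1 e2); split. apply Rmin_pos; auto.
    pose proof (Rmin_l e1 e2); pose proof (Rmin_r e1 e2).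
    intros s' t' A B; apply HW; [apply H1|apply H2]; lra.
  - intros H s t Wst. destruct (H s t Wst) as [e [He Q]].
    assert (ball : forall c : I, openI (fun x => Rabs (vI x - vI c) < e)).
    { intros c. apply openI_relopen. intros x Hx. exists (e - Rabs (vI x - vI c)); split. lra.
      intros x' Hx'. pose proof (Rabs_triang (vI x' - vI x) (vI x - vI c)).
      replace (vI x' - vI x + (vI x - vI c)) with (vI x' - vI c) in H0 by ring. lra. }
    exists (fun x => Rabs (vI x - vI s) < e), (fun x => Rabs (vI x - vI t) < e).
    repeat split; auto; try (unfold Rminus; rewrite Rplus_opp_r, Rabs_R0; auto).
Qed.

Lemma ballII_open c e : openII (ballII c e).
Proof. apply openII_eps. intros s t [A B]. simpl in A, B.
  exists (Rmin (e - Rabs (vI s - vI (fst c))) (e - Rabs (vI t - vI (snd c)))).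
  split. apply Rmin_pos; lra.
  intros s' t' A' B'. pose proof (Rmin_l (e - Rabs (vI s - vI (fst c))) (e - Rabs (vI t - vI (snd c)))).
  pose proof (Rmin_r (e - Rabs (vI s - vI (fst c))) (e - Rabs (vI t - vI (snd c)))).
  pose proof (Rabs_triang (vI s' - vI s) (vI s - vI (fst c))).
  pose proof (Rabs_triang (vI t' - vI t) (vI t - vI (snd c))).
  replace (vI s' - vI s + (vI s - vI (fst c))) with (vI s' - vI (fst c)) in H1 by ring.
  replace (vI t' - vI t + (vI t - vI (snd c))) with (vI t' - vI (snd c)) in H2 by ring.
  split; simpl; lra.
Qed.

Definition TopII : Top.
Proof.
  refine {| carrier := (I * I)%type; is_open := openII |}.
  - apply openII_eps. intros; exists 1; split; auto; lra.
  - intros U V HU HV. apply openII_eps.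
    intros s t [Ut Vt]. destruct (proj1 (openII_eps _) HU s t Ut) as [e1 [He1 H1]], (proj1 (openII_eps _) HV s t Vt) as [e2 [He2 H2]].
    exists (Rmin e1 e2); split. apply Rmin_pos; auto.
    pose proof (Rmin_l e1 e2); pose proof (Rmin_r e1 e2).
    intros s' t' A B; split; [apply H1|apply H2]; lra.
  - intros F HF. apply openII_eps. intros s t [U [FU Ut]].
    pose proof (HF U FU) as HU. destruct (proj1 (openII_eps _) HU s t Ut) as [e [He H]].
    exists e; split; auto. intros s' t' A B. exists U; split; auto.
Defined.

Lemma pathII (psi : I -> I * I) :
  (forall s s', Rabs (vI (fst (psi s)) - vI (fst (psi s'))) <= Rabs (vI s - vI s')) ->
  (forall s s', Rabs (vI (snd (psi s)) - vI (snd (psi s'))) <= Rabs (vI s - vI s')) ->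
  @is_path TopII psi.
Proof.
  intros H1 H2 W HW. simpl in HW. apply openI_relopen. intros t Wt.
  let h := fresh in pose proof (proj1 (openII_eps _) HW) as h; clear HW; rename h into HW. destruct (psi t) as [a b] eqn:E.
  destruct (HW a b Wt) as [e [He Q]].
  exists e; split; auto. intros t' Ht'. rewrite (surjective_pairing (psi t')). apply Q.
  - replace a with (fst (psi t)) by (rewrite E; auto). eapply Rle_lt_trans; [apply H1|auto].
  - replace b with (snd (psi t)) by (rewrite E; auto). eapply Rle_lt_trans; [apply H2|auto].
Qed.

Definition linII (y z : I * I) (t : I) : I * I := (linI (fst y) (fst z) t, linI (snd y) (snd z) t).
Lemma linII_path y z : @is_path TopII (linII y z).
Proof. apply pathII; intros; simpl; apply linI_lip. Qed.

Lemma lpc_II : locally_path_connected TopII.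
Proof.
  intros [a b] U HU Ux. simpl in HU. let h := fresh in pose proof (proj1 (openII_eps _) HU) as h; clear HU; rename h into HU. destruct (HU a b Ux) as [e [He H]].
  exists (ballII (a, b) e). split; [|split; [|split]].
  - apply ballII_open.
  - unfold ballII; simpl; unfold Rminus; rewrite !Rplus_opp_r, Rabs_R0; auto.
  - intros [s t] [A B]; apply H; auto.
  - intros y z Hy Hz. exists (linII y z). split; [apply linII_path|split; [|split]].
    + unfold linII; rewrite !linI0; destruct y; auto.
    + unfold linII; rewrite !linI1; destruct z; auto.
    + intros t. destruct Hy as [y1 y2], Hz as [z1 z2]. unfold ballII, linII; cbn [fst snd] in *.
      rewrite !linI_v. pose proof (vI_bnd t).
      assert (forall u v w : R, Rabs (u - w) < e -> Rabs (v - w) < e ->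
          Rabs ((1 - vI t) * u + vI t * v - w) < e).
      { intros u v w Hu Hv.
        replace ((1 - vI t) * u + vI t * v - w) with ((1 - vI t) * (u - w) + vI t * (v - w)) by ring.
        eapply Rle_lt_trans. apply Rabs_triang. rewrite !Rabs_mult, (Rabs_right (1 - vI t)), (Rabs_right (vI t)) by lra.
        destruct (Req_dec (vI t) 0). rewrite H1. lra. nra. }
      split; apply H1; auto.
Qed.

Lemma connected_II : connected TopII.
Proof.
  apply (pathconn_connected TopII (I0, I0)). intros y. exists (linII (I0, I0) y).
  split. apply linII_path. split; unfold linII; simpl; [rewrite !linI0|rewrite !linI1; destruct y]; auto.
Qed.

Definition scaleII (t : I) (q : I * I) : I * I := (cl (vI t * vI (fst q)), cl (vI t * vI (snd q))).

Lemma scale_cont {X : Top} (f : TopII -> X) (g : I -> I * I) :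
  continuous f -> @is_path TopII g ->
  forall V : X -> Prop, is_open X V -> openII (fun st => V (f (scaleII (snd st) (g (fst st))))).
Proof.
  intros Hf Hg V HV. apply openII_eps. intros s t Vst.
  pose proof (Hf V HV) as W. simpl in W. let h := fresh in pose proof (proj1 (openII_eps _) W) as h; clear W; rename h into W.
  destruct (scaleII t (g s)) as [q1 q2] eqn:Eq.
  destruct (W q1 q2 ltac:(simpl in Vst; rewrite Eq in Vst; auto)) as [e [He Q]].
  pose proof (Hg (ballII (g s) (e/2)) (ballII_open _ _)) as Hb. apply openI_relopen in Hb.
  destruct (Hb s) as [d [Hd Hd']].
  { unfold ballII; unfold Rminus; rewrite !Rplus_opp_r, Rabs_R0; lra. }
  exists (Rmin d (e/2)); split. apply Rmin_pos; lra.
  intros s' t' A B. pose proof (Rmin_l d (e/2)); pose proof (Rmin_r d (e/2)).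
  destruct (Hd' s' ltac:(lra)) as [C1 C2]. simpl.
  assert (key : forall u u' : I, Rabs (vI u' - vI u) < e/2 ->
     Rabs (vI (cl (vI t' * vI u')) - vI (cl (vI t * vI u))) < e).
  { intros u u' Hu. eapply Rle_lt_trans. apply cl_lip.
    replace (vI t' * vI u' - vI t * vI u) with (vI t' * (vI u' - vI u) + (vI t' - vI t) * vI u) by ring.
    eapply Rle_lt_trans. apply Rabs_triang. rewrite !Rabs_mult.
    pose proof (vI_bnd t'); pose proof (vI_bnd u).
    rewrite (Rabs_right (vI t')), (Rabs_right (vI u)) by lra.
    pose proof (Rabs_pos (vI u' - vI u)); pose proof (Rabs_pos (vI t' - vI t)). nra. }
  unfold scaleII in Eq. injection Eq as E1 E2.
  simpl. unfold scaleII. apply Q; simpl.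
  - rewrite <- E1. apply key; auto.
  - rewrite <- E2. apply key; auto.
Qed.

Lemma scale0 q : scaleII I0 q = (I0, I0).
Proof. unfold scaleII, vI at 1 3, I0; simpl. rewrite !Rmult_0_l, cl0; auto. Qed.
Lemma scale1 q : scaleII I1 q = q.
Proof. unfold scaleII, vI at 1 3, I1; simpl. rewrite !Rmult_1_l, !cl_vI; destruct q; auto. Qed.

Lemma homot_refl {X : Top} (x0 : X) (a : I -> X) : is_loop x0 a -> loop_homotopic x0 a a.
Proof.
  intros [Ha [a0 a1]]. exists (fun st => a (fst st)). split; [|repeat split; simpl; auto].
  intros V HV. apply openII_eps. intros s t Vs. simpl in Vs.
  destruct (proj1 (path_eps a) Ha V HV s Vs) as [e [He Q]]. exists e; split; auto.
Qed.

Lemma const_loop {X : Top} (x : X) : is_loop x (fun _ : I => x).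
Proof. split. apply path_const. auto. Qed.

Lemma lift_uniq {Xt X : Top} (p : Xt -> X) (xt0 : Xt) : unique_lifting p xt0 ->
  forall f : I -> X, is_path f -> f I0 = p xt0 ->
  (forall g : I -> TopI, is_loop (X:=TopI) I0 g -> induced_sub p xt0 (fun s => f (g s))) ->
  forall g1 g2 : I -> Xt, is_path g1 -> g1 I0 = xt0 -> (forall s, p (g1 s) = f s) ->
  is_path g2 -> g2 I0 = xt0 -> (forall s, p (g2 s) = f s) -> g1 = g2.
Proof.
  intros UL f Hf f0 Hl g1 g2 P1 A1 B1 P2 A2 B2.
  destruct (UL TopI I0 f connected_I lpc_I Hf f0 Hl) as [ft [_ U]].
  rewrite (U g1), (U g2); auto.
Qed.

Lemma loop_lift {Xt X : Top} (p : Xt -> X) (xt0 : Xt) : continuous p -> unique_lifting p xt0 ->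
  forall a, induced_sub p xt0 a ->
  exists at_ : I -> Xt, is_path at_ /\ at_ I0 = xt0 /\ at_ I1 = xt0 /\ forall s, p (at_ s) = a s.
Proof.
  intros Hp UL a [b [[Hb [b0 b1]] [H [HH [Hs0 [Hs1 [Ht0 Ht1]]]]]]].
  assert (Hc : @continuous TopII X H) by exact HH.
  assert (H00 : H (I0, I0) = p xt0) by apply Ht0.
  destruct (UL TopII (I0, I0) H connected_II lpc_II Hc H00) as [Ht [[HtC [Ht00 HtP]] _]].
  { intros g [Hg [g0 g1]]. exists (fun _ => xt0). split. apply const_loop.
    exists (fun st => H (scaleII (snd st) (g (fst st)))). split; [|split; [|split; [|split]]].
    - apply scale_cont; auto.
    - intros s; simpl. rewrite scale0; auto.
    - intros s; simpl. rewrite scale1; auto.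
    - intros t; simpl. rewrite g0. replace (scaleII t (I0, I0)) with (I0, I0); auto.
      unfold scaleII. replace (vI (fst (I0, I0))) with 0 by reflexivity.
      replace (vI (snd (I0, I0))) with 0 by reflexivity. rewrite Rmult_0_r, cl0; auto.
    - intros t; simpl. rewrite g1. replace (scaleII t (I0, I0)) with (I0, I0); auto.
      unfold scaleII. replace (vI (fst (I0, I0))) with 0 by reflexivity.
      replace (vI (snd (I0, I0))) with 0 by reflexivity. rewrite Rmult_0_r, cl0; auto. }
  assert (edge_h : forall t : I, @is_path TopII (fun s => (s, t))).
  { intros t; apply pathII; intros; simpl; try (rewrite Rminus_diag, Rabs_R0; apply Rabs_pos); try apply Rle_refl. }
  assert (edge_v : forall s : I, @is_path TopII (fun t => (s, t))).
  { intros s; apply pathII; intros; simpl; try (rewrite Rminus_diag, Rabs_R0; apply Rabs_pos); try apply Rle_refl. }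
  assert (constcase : forall g1 g2 : I -> Xt, is_path g1 -> g1 I0 = xt0 -> (forall s, p (g1 s) = p xt0) ->
     is_path g2 -> g2 I0 = xt0 -> (forall s, p (g2 s) = p xt0) -> g1 = g2).
  { intros. apply (lift_uniq p xt0 UL (fun _ => p xt0)); auto. apply path_const.
    intros g _. exists (fun _ => xt0). split. apply const_loop. apply homot_refl, const_loop. }
  assert (Bot : (fun s => Ht (s, I0)) = b).
  { apply (lift_uniq p xt0 UL (fun s => p (b s))); auto.
    - apply path_comp; auto.
    - rewrite b0; auto.
    - intros g [Hg [g0 g1]]. exists (fun s => b (g s)). assert (is_loop xt0 (fun s => b (g s))).
      { split. apply (path_comp (X:=TopI) b g); auto. rewrite g0, g1; auto. }
      split; auto. apply homot_refl. split; [apply path_comp; auto; apply H0|].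
      destruct H0 as [_ [E0 E1]]. rewrite E0, E1; auto.
    - apply (path_comp (X:=TopII) Ht (fun s => (s, I0))); auto.
    - intros s. rewrite HtP. simpl. auto. }
  assert (B1 : Ht (I1, I0) = xt0) by (change (Ht (I1, I0)) with ((fun s => Ht (s, I0)) I1); rewrite Bot; auto).
  assert (Left : (fun t => Ht (I0, t)) = (fun _ => xt0)).
  { apply constcase; auto. apply (path_comp (X:=TopII) Ht (fun t => (I0, t))); auto.
    intros s. rewrite HtP; simpl; auto. apply path_const. }
  assert (Right : (fun t => Ht (I1, t)) = (fun _ => xt0)).
  { apply constcase; auto. apply (path_comp (X:=TopII) Ht (fun t => (I1, t))); auto.
    intros s. rewrite HtP; simpl; auto. apply path_const. }
  exists (fun s => Ht (s, I1)). split; [|split; [|split]].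
  - apply (path_comp (X:=TopII) Ht (fun s => (s, I1))); auto.
  - change (Ht (I0, I1)) with ((fun t => Ht (I0, t)) I1). rewrite Left; auto.
  - change (Ht (I1, I1)) with ((fun t => Ht (I1, t)) I1). rewrite Right; auto.
  - intros s. rewrite HtP; simpl; auto.
Qed.

Record Fam (X : Top) (x0 : X) := mkFam {
  fJ : Type; fX : fJ -> Top; fx0 : forall j, fX j; fp : forall j, fX j -> X;
  fpx : forall j, fp j (fx0 j) = x0 }.
Arguments fJ {X x0}. Arguments fX {X x0}. Arguments fx0 {X x0}. Arguments fp {X x0}. Arguments fpx {X x0}.

Record fpt {X : Top} {x0 : X} (F : Fam X x0) := mkF {
  fx : X; fz : forall j : fJ F, fX F j; fpf : forall j, fp F j (fz j) = fx }.
Arguments fx {X x0 F}. Arguments fz {X x0 F}. Arguments fpf {X x0 F}. Arguments mkF {X x0 F}.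

Definition base {X : Top} {x0 : X} (F : Fam X x0) : fpt F := mkF x0 (fx0 F) (fpx F).

Lemma fpt_eq {X : Top} {x0 : X} {F : Fam X x0} (a b : fpt F) :
  fx a = fx b -> (forall j, fz a j = fz b j) -> a = b.
Proof.
  destruct a as [a1 a2 a3], b as [b1 b2 b3]; simpl. intros E1 E2. subst.
  assert (a2 = b2) by (apply functional_extensionality_dep; auto). subst.
  f_equal. apply proof_irrelevance.
Qed.

Inductive basicO {X : Top} {x0 : X} {F : Fam X x0} : (fpt F -> Prop) -> Prop :=
| bo_full : basicO (fun _ => True)
| bo_x : forall U, is_open X U -> basicO (fun z => U (fx z))
| bo_j : forall j U, is_open (fX F j) U -> basicO (fun z => U (fz z j))
| bo_and : forall O1 O2, basicO O1 -> basicO O2 -> basicO (fun z => O1 z /\ O2 z).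

Definition coordcont {X : Top} {x0 : X} {F : Fam X x0} {Y : Top} (h : Y -> fpt F) : Prop :=
  continuous (fun y => fx (h y)) /\ forall j, continuous (fun y => fz (h y) j).

Definition reach {X : Top} {x0 : X} (F : Fam X x0) (z : fpt F) : Prop :=
  exists (Y : Top) (y0 : Y) (h : Y -> fpt F), connected Y /\ locally_path_connected Y /\
    coordcont h /\ h y0 = base F /\ exists y, h y = z.

Definition Cset {X : Top} {x0 : X} (F : Fam X x0) : Type := { z : fpt F | reach F z }.

Definition C0 {X : Top} {x0 : X} (F : Fam X x0) : Top.
Proof. refine {| carrier := Cset F; is_open := fun _ => True |}; auto. Defined.

Definition cpath {X : Top} {x0 : X} {F : Fam X x0} (g : I -> Cset F) : Prop :=
  coordcont (Y := TopI) (fun t => proj1_sig (g t)).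

Definition PC {X : Top} {x0 : X} {F : Fam X x0} (O : fpt F -> Prop) (z w : Cset F) : Prop :=
  exists g : I -> Cset F, cpath g /\ g I0 = z /\ g I1 = w /\ forall t, O (proj1_sig (g t)).

Definition openC {X : Top} {x0 : X} {F : Fam X x0} (W : Cset F -> Prop) : Prop :=
  forall z, W z -> exists O, basicO O /\ O (proj1_sig z) /\ forall w, PC O z w -> W w.

Lemma PC_mono {X : Top} {x0 : X} {F : Fam X x0} (O1 O2 : fpt F -> Prop) z w :
  (forall u, O1 u -> O2 u) -> PC O1 z w -> PC O2 z w.
Proof. intros H [g [A [B [C D]]]]. exists g; split; [exact A|split; [exact B|split; [exact C|intros t; apply H, D]]]. Qed.

Definition XtC {X : Top} {x0 : X} (F : Fam X x0) : Top.
Proof.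
  refine {| carrier := Cset F; is_open := openC |}.
  - intros z _. exists (fun _ => True); split; [constructor|split; auto].
  - intros U V HU HV z [Uz Vz]. destruct (HU z Uz) as [O1 [B1 [O1z H1]]], (HV z Vz) as [O2 [B2 [O2z H2]]].
    exists (fun u => O1 u /\ O2 u); split; [constructor; auto|split; auto].
    intros w Hw; split; [apply H1|apply H2]; eapply PC_mono; try exact Hw; intros u [a b]; auto.
  - intros Fm HF z [U [FU Uz]]. destruct (HF U FU z Uz) as [O [B [Oz H]]].
    exists O; repeat split; auto. intros w Hw. exists U; split; auto.
Defined.

Lemma open_ext (Y : Top) (P Q : Y -> Prop) : (forall y, P y <-> Q y) -> is_open Y P -> is_open Y Q.
Proof. intros H HP. replace Q with P; auto. apply functional_extensionality; intros y; apply propositional_extensionality; auto. Qed.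

Lemma preim_basic {X : Top} {x0 : X} {F : Fam X x0} {Y : Top} (h : Y -> fpt F) :
  coordcont h -> forall O, basicO O -> is_open Y (fun y => O (h y)).
Proof.
  intros [Hx Hj] O B. induction B.
  - apply open_full.
  - apply Hx; auto.
  - apply (Hj j); auto.
  - apply open_inter; auto.
Qed.

Lemma cont_lemma {X : Top} {x0 : X} {F : Fam X x0} (Y : Top) (h : Y -> Cset F) :
  locally_path_connected Y -> coordcont (fun y => proj1_sig (h y)) -> @continuous Y (XtC F) h.
Proof.
  intros Hl Hc W HW. simpl in HW.
  apply (open_ext Y (fun y => exists N, (is_open Y N /\ forall y', N y' -> W (h y')) /\ N y)).
  - intros y; split. intros [N [[_ HN] Ny]]; auto.
    intros Wy. destruct (HW _ Wy) as [O [B [Oz HO]]].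
    pose proof (preim_basic _ Hc O B) as Ho.
    destruct (Hl y _ Ho Oz) as [N [HN [Ny [NO Np]]]].
    exists N; split; auto. split; auto. intros y' Ny'. apply HO.
    destruct (Np y y' Ny Ny') as [g [Hg [g0 [g1 gN]]]].
    exists (fun t => h (g t)). split; [split|split; [|split]].
    + apply (path_comp (fun y => fx (proj1_sig (h y))) g); auto. apply Hc.
    + intros j. apply (path_comp (fun y => fz (proj1_sig (h y)) j) g); auto. apply Hc.
    + rewrite g0; auto.
    + rewrite g1; auto.
    + intros t. apply NO, gN.
  - apply open_union. intros N [HN _]; auto.
Qed.

Lemma path_ext {Y : Top} (g g' : I -> Y) : is_path g -> (forall t, g t = g' t) -> is_path g'.
Proof. intros H E. replace g' with g; auto. apply functional_extensionality; auto. Qed.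

Lemma concat_map {A B : Top} (f : A -> B) (g1 g2 : I -> A) t :
  f (concat g1 g2 t) = concat (fun s => f (g1 s)) (fun s => f (g2 s)) t.
Proof. unfold concat; destruct Rle_dec; auto. Qed.

Lemma cpath_concat {X : Top} {x0 : X} {F : Fam X x0} (g1 g2 : I -> C0 F) :
  cpath g1 -> cpath g2 -> g1 I1 = g2 I0 -> cpath (concat g1 g2).
Proof.
  intros [A1 B1] [A2 B2] E. split.
  - eapply path_ext. apply (concat_path (fun s => fx (proj1_sig (g1 s))) (fun s => fx (proj1_sig (g2 s)))); auto.
    rewrite E; auto. intros t; rewrite (concat_map (B:=X) (fun z : C0 F => fx (proj1_sig z))); auto.
  - intros j. eapply path_ext. apply (concat_path (fun s => fz (proj1_sig (g1 s)) j) (fun s => fz (proj1_sig (g2 s)) j)); auto.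
    apply B1. apply B2. rewrite E; auto.
    intros t; rewrite (concat_map (B:=fX F j) (fun z : C0 F => fz (proj1_sig z) j)); auto.
Qed.

Lemma cpath_rev {X : Top} {x0 : X} {F : Fam X x0} (g : I -> C0 F) : cpath g -> cpath (revp g).
Proof. intros [A B]. split. apply (revp_path (fun s => fx (proj1_sig (g s)))); auto.
  intros j. apply (revp_path (fun s => fz (proj1_sig (g s)) j)); apply B. Qed.

Lemma cpath_pre {X : Top} {x0 : X} {F : Fam X x0} (g : I -> C0 F) u : cpath g -> cpath (prep g u).
Proof. intros [A B]. split. apply (prep_path (fun s => fx (proj1_sig (g s)))); auto.
  intros j. apply (prep_path (fun s => fz (proj1_sig (g s)) j)); apply B. Qed.

Lemma cont_const {Y Z : Top} (c : Z) : continuous (fun _ : Y => c).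
Proof.
  intros V HV. destruct (classic (V c)).
  - apply (open_ext Y (fun _ => True)); [intros; split; auto|apply open_full].
  - apply (open_ext Y (fun y => exists U, (fun _ => False) U /\ U y)).
    intros y; split; [intros [U [[] _]]|intros; contradiction].
    apply open_union. intros U [].
Qed.

Lemma cpath_const {X : Top} {x0 : X} {F : Fam X x0} (z : Cset F) : cpath (fun _ : I => z).
Proof. split. apply (cont_const (Y:=TopI)). intros j; apply (cont_const (Y:=TopI)). Qed.

Lemma cpath_is_path {X : Top} {x0 : X} {F : Fam X x0} (g : I -> Cset F) : cpath g -> @is_path (XtC F) g.
Proof. intros H. apply (cont_lemma TopI g lpc_I H). Qed.

Lemma Cset_eq {X : Top} {x0 : X} {F : Fam X x0} (a b : Cset F) : proj1_sig a = proj1_sig b -> a = b.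
Proof. destruct a as [a ha], b as [b hb]; simpl; intros ->. f_equal; apply proof_irrelevance. Qed.

Lemma reach_base {X : Top} {x0 : X} (F : Fam X x0) : reach F (base F).
Proof. exists TopI, I0, (fun _ => base F).
  split; [apply connected_I|split;[apply lpc_I|split;[split;[apply cont_const|intros j; apply cont_const]|split;[reflexivity|exists I0; reflexivity]]]]. Qed.

Definition xt0C {X : Top} {x0 : X} (F : Fam X x0) : XtC F := exist _ (base F) (reach_base F).
Definition pC {X : Top} {x0 : X} (F : Fam X x0) (z : XtC F) : X := fx (proj1_sig z).
Definition piJ {X : Top} {x0 : X} (F : Fam X x0) j (z : XtC F) : fX F j := fz (proj1_sig z) j.

Lemma pC_cont {X : Top} {x0 : X} (F : Fam X x0) : continuous (pC F).
Proof. intros U HU z Uz. exists (fun u => U (fx u)). split. constructor; auto. split; auto.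
  intros w [g [_ [_ [g1 gO]]]]. unfold pC. rewrite <- g1. apply gO. Qed.

Lemma piJ_cont {X : Top} {x0 : X} (F : Fam X x0) j : continuous (piJ F j).
Proof. intros U HU z Uz. exists (fun u => U (fz u j)). split. constructor; auto. split; auto.
  intros w [g [_ [_ [g1 gO]]]]. unfold piJ. rewrite <- g1. apply gO. Qed.

Lemma PC_sub {X : Top} {x0 : X} {F : Fam X x0} O z (g : I -> C0 F) :
  cpath g -> g I0 = z -> (forall t, O (proj1_sig (g t))) -> forall u, PC O z (g u).
Proof. intros Hg g0 gO u. exists (prep g u). split. apply cpath_pre; auto.
  split. rewrite prep0; auto. split. rewrite prep1; auto. intros t; apply gO. Qed.

Lemma lpc_XtC {X : Top} {x0 : X} (F : Fam X x0) : locally_path_connected (XtC F).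
Proof.
  intros z W HW Wz. destruct (HW z Wz) as [O [B [Oz HO]]]. exists (PC O z).
  split; [|split; [|split]].
  - intros w [g [cg [g0 [g1 gO]]]]. exists O. split; auto. split. rewrite <- g1; apply gO.
    intros w' [g' [cg' [g0' [g1' gO']]]]. exists (concat (X:=C0 F) g g'). split; [|split; [|split]].
    + apply cpath_concat; auto. rewrite g1, g0'; auto.
    + rewrite concat0; auto.
    + rewrite concat1; auto.
    + intros t. destruct (concat_val (X:=C0 F) g g' t) as [s [E|E]]; rewrite E; auto.
  - exists (fun _ => z). split. apply cpath_const. repeat split; auto.
  - auto.
  - intros y w [gy [cy [y0 [y1 yO]]]] [gw [cw [w0 [w1 wO]]]].
    exists (concat (X:=C0 F) (revp (X:=C0 F) gy) gw). split; [|split; [|split]].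
    + apply cpath_is_path. apply cpath_concat; auto. apply cpath_rev; auto. rewrite (revp1 (X:=C0 F)), y0, w0; auto.
    + rewrite concat0, (revp0 (X:=C0 F)); auto.
    + rewrite concat1; auto.
    + intros t. destruct (concat_val (X:=C0 F) (revp (X:=C0 F) gy) gw t) as [s [E|E]]; rewrite E.
      * unfold revp. apply (PC_sub O z gy); auto.
      * apply (PC_sub O z gw); auto.
Qed.

Lemma lift_C {X : Top} {x0 : X} {F : Fam X x0} (Y : Top) (y0 : Y) (h : Y -> fpt F) :
  connected Y -> locally_path_connected Y -> coordcont h -> h y0 = base F ->
  { hC : Y -> XtC F | continuous hC /\ (forall y, proj1_sig (hC y) = h y) /\ hC y0 = xt0C F }.
Proof.
  intros Hc Hl Hh H0.
  assert (R : forall y, reach F (h y)) by (intros y; exists Y, y0, h; split; [auto|split; [auto|split;[auto|split;[auto|exists y; auto]]]]).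
  exists (fun y => exist _ (h y) (R y)). split; [|split].
  - apply cont_lemma; auto.
  - auto.
  - apply Cset_eq; simpl; auto.
Qed.

Lemma connected_XtC {X : Top} {x0 : X} (F : Fam X x0) : connected (XtC F).
Proof.
  split. exists (xt0C F); auto.
  assert (side : forall U V : XtC F -> Prop, is_open _ U -> is_open _ V ->
     (forall x, U x \/ V x) -> (forall x, ~ (U x /\ V x)) -> forall z, U z -> U (xt0C F)).
  { intros U V HU HV Hc Hd z Uz. destruct (Hc (xt0C F)) as [A|A]; auto. exfalso.
    destruct (proj2_sig z) as [Y [y0 [h [Cy [Ly [Hh [H0 [y Hy]]]]]]]].
    destruct (lift_C Y y0 h Cy Ly Hh H0) as [hC [Hcont [Hv Hb]]].
    destruct Cy as [_ Cy]. apply (Cy (fun y => U (hC y)) (fun y => V (hC y))); auto.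
    split. exists y. replace (hC y) with z; auto.
    apply Cset_eq; rewrite Hv; auto.
    exists y0; rewrite Hb; auto. }
  intros U V HU HV Hc Hd [[u Uu] [v Vv]].
  apply (Hd (xt0C F)); split.
  - apply (side U V HU HV Hc Hd u Uu).
  - apply (side V U HV HU) with (z := v); auto. intros x; destruct (Hc x); auto. intros x [a b]; apply (Hd x); auto.
Qed.

Lemma cont_comp {A B C : Top} (f : A -> B) (g : B -> C) : continuous f -> continuous g -> continuous (fun x => g (f x)).
Proof. intros Hf Hg V HV. apply (Hf (fun y => V (g y))), Hg, HV. Qed.

Lemma proj_induced {X : Top} {x0 : X} (F : Fam X x0) j a :
  induced_sub (pC F) (xt0C F) a -> induced_sub (fp F j) (fx0 F j) a.
Proof.
  intros [b [[Hb [b0 b1]] Hh]]. exists (fun s => piJ F j (b s)). split.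
  - split. apply path_comp; auto. apply piJ_cont. rewrite b0, b1; auto.
  - rewrite (fpx F j). replace (fun s => fp F j (piJ F j (b s))) with (fun s => pC F (b s)). exact Hh.
    apply functional_extensionality; intros s. unfold piJ, pC. rewrite fpf; auto.
Qed.

Lemma UL_C {X : Top} {x0 : X} (F : Fam X x0) :
  (forall j, unique_lifting (fp F j) (fx0 F j)) -> unique_lifting (pC F) (xt0C F).
Proof.
  intros HUL Y y0 f Cy Ly Hf Hf0 Hloop.
  assert (Hf0' : forall j, f y0 = fp F j (fx0 F j)) by (intros j; rewrite fpx; exact Hf0).
  pose (E := fun j => constructive_indefinite_description _
     (HUL j Y y0 f Cy Ly Hf (Hf0' j) (fun g Hg => proj_induced F j _ (Hloop g Hg)))).
  pose (h := fun y => mkF (F := F) (f y) (fun j => proj1_sig (E j) y)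
      (fun j => proj2 (proj2 (proj1 (proj2_sig (E j)))) y)).
  assert (Hh : coordcont h). { split. exact Hf. intros j. exact (proj1 (proj1 (proj2_sig (E j)))). }
  assert (H0 : h y0 = base F). { apply fpt_eq; simpl. exact Hf0. intros j. exact (proj1 (proj2 (proj1 (proj2_sig (E j))))). }
  destruct (lift_C Y y0 h Cy Ly Hh H0) as [hC [Hc [Hv Hb]]].
  exists hC. split. split; [auto|split; auto]. intros y. unfold pC. rewrite Hv. reflexivity.
  intros gt [Gc [G0 Gp]]. apply functional_extensionality; intros y. apply Cset_eq. rewrite Hv.
  apply fpt_eq. simpl. apply Gp.
  intros j. simpl.
  assert (U : (fun y => piJ F j (gt y)) = proj1_sig (E j)).
  { apply (proj2 (proj2_sig (E j))). split; [|split].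
    - apply cont_comp; auto. apply piJ_cont.
    - rewrite G0; reflexivity.
    - intros y'. unfold piJ. rewrite fpf. apply Gp. }
  change (fz (proj1_sig (gt y)) j) with ((fun y => piJ F j (gt y)) y). rewrite U. reflexivity.
Qed.

Lemma char_C {X : Top} {x0 : X} (F : Fam X x0) :
  (forall j, continuous (fp F j)) -> (forall j, unique_lifting (fp F j) (fx0 F j)) ->
  forall a, is_loop x0 a -> (forall j, induced_sub (fp F j) (fx0 F j) a) -> induced_sub (pC F) (xt0C F) a.
Proof.
  intros Hc HUL a Ha Hi.
  assert (Ex : forall j, exists at_ : I -> fX F j, is_path at_ /\ at_ I0 = fx0 F j /\ at_ I1 = fx0 F j /\
      forall s, fp F j (at_ s) = a s).
  { intros j. apply loop_lift; auto. }
  pose (L := fun j => constructive_indefinite_description _ (Ex j)).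
  pose (h := fun t => mkF (F := F) (a t) (fun j => proj1_sig (L j) t)
      (fun j => proj2 (proj2 (proj2 (proj2_sig (L j)))) t)).
  destruct Ha as [Pa [a0 a1]].
  assert (Hh : coordcont (Y := TopI) h). { split. exact Pa. intros j. exact (proj1 (proj2_sig (L j))). }
  assert (H0 : h I0 = base F). { apply fpt_eq; simpl. exact a0. intros j. exact (proj1 (proj2 (proj2_sig (L j)))). }
  assert (H1 : h I1 = base F). { apply fpt_eq; simpl. exact a1. intros j. exact (proj1 (proj2 (proj2 (proj2_sig (L j))))). }
  destruct (lift_C TopI I0 h connected_I lpc_I Hh H0) as [hC [HcC [Hv Hb]]].
  exists hC. split. split. exact HcC. split. exact Hb. apply Cset_eq. rewrite Hv. rewrite H1. reflexivity.
  assert (E : forall s, pC F (hC s) = a s).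
  { intros s. change (pC F (hC s)) with (fx (proj1_sig (hC s))). rewrite (Hv s). reflexivity. }
  assert (La : is_loop x0 a) by (split; auto).
  destruct (homot_refl x0 a La) as [H [HH [A [B [C D]]]]].
  exists H. split; auto. split. intros s; rewrite E; auto. split; auto.
Qed.
Close Scope R_scope.

Theorem corollary2p11 (X : Top) (x0 : X)
  (HX : connected X) (HXl : locally_path_connected X)
  (J : Type) (Hs : J -> (I -> X) -> Prop)
  (Hgc : forall j, generalized_covering_subgroup X x0 (Hs j)) :
  generalized_covering_subgroup X x0 (fun a => forall j, Hs j a).
Proof.
  pose (D := fun j => constructive_indefinite_description _ (Hgc j)).
  pose (E := fun j => constructive_indefinite_description _ (proj2_sig (D j))).
  pose (G := fun j => constructive_indefinite_description _ (proj2_sig (E j))).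
  assert (P := fun j => proj2_sig (G j)). simpl in P.
  pose (F := mkFam X x0 J (fun j => proj1_sig (D j)) (fun j => proj1_sig (E j)) (fun j => proj1_sig (G j))
     (fun j => proj1 (proj2 (proj2 (proj2 (P j)))))).
  assert (Hc : forall j, continuous (fp F j)) by (intros j; exact (proj1 (proj2 (proj2 (P j))))).
  assert (HUL : forall j, unique_lifting (fp F j) (fx0 F j)) by (intros j; exact (proj1 (proj2 (proj2 (proj2 (proj2 (P j))))))).
  assert (Hch : forall j a, is_loop x0 a -> (Hs j a <-> induced_sub (fp F j) (fx0 F j) a))
    by (intros j; exact (proj2 (proj2 (proj2 (proj2 (proj2 (P j))))))).
  exists (XtC F), (xt0C F), (pC F).
  split. apply connected_XtC. split. apply lpc_XtC. split. apply pC_cont. split. reflexivity.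
  split. apply UL_C; auto.
  intros a Ha. split.
  - intros H. apply char_C; auto. intros j. apply (Hch j a Ha), H.
  - intros H j. apply (Hch j a Ha). apply proj_induced, H.
Qed.
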